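(* Let $(X,\tau)$ be a topological space, $\delta$ a quasi-proximity compatible with $\tau$ such that $\mathcal{V}_\delta$ is transitive, and $\mathcal{B}=\mathcal{B}(\mathcal{V}_\delta)$. Then there exists $\mathcal{V}\in\pi(\delta)\cap T(\tau)$ with $\mathcal{V}\neq\mathcal{V}_\delta$ if and only if at least one of the following holds: (1) there are sets $N_i\in\mathcal{B}$ ($i\in\mathbb{N}$) with $N_i\subsetneq N_{i+1}$ for all $i$ and $\bigcup_{i=1}^\infty N_i\in\mathcal{B}$; (2) there are sets $N_i\in\mathcal{B}$ ($i\in\mathbb{N}$) with $N_{i+1}\subsetneq N_i$ for all $i$ and $\bigcap_{i=1}^\infty N_i\in\mathcal{B}$.
   Context: Quasi-uniformities and quasi-proximities are in the sense of Fletcher–Lindgren; compatible means inducing the topology $\tau$. $T(\tau)$ is the set of compatible transitive quasi-uniformities on $(X,\tau)$ (transitive = having a base of transitive entourages). $\pi(\delta)$ is the set of quasi-uniformities inducing $\delta$, and $\mathcal{V}_\delta$ its coarsest (totally bounded) element. For $N\subseteq X$, $U_N=(N\times N)\cup((X\setminus N)\times X)$ and $\mathcal{B}(\mathcal{V}_\delta)=\{N\in\tau:U_N\in\mathcal{V}_\delta\}$, which is an l-base: a base of $\tau$ closed under finite unions and intersections containing $\emptyset,X$. *)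

(* Defs.v *)
From Stdlib Require Import Classical.

Set Implicit Arguments.

Section Defs.
Variable X : Type.

Definition set := X -> Prop.
Definition rel := X -> X -> Prop.

Definition subset (A B : set) : Prop := forall x, A x -> B x.
Definition setU (A B : set) : set := fun x => A x \/ B x.
Definition setC (A : set) : set := fun x => ~ A x.
Definition set0 : set := fun _ => False.
Definition setT : set := fun _ => True.
Definition single (x : X) : set := fun y => y = x.

Definition is_topology (tau : set -> Prop) : Prop :=
  tau set0 /\ tau setT /\
  (forall A B, tau A -> tau B -> tau (fun x => A x /\ B x)) /\
  (forall F : set -> Prop, (forall A, F A -> tau A) ->
     tau (fun x => exists A, F A /\ A x)).

Definition is_quasi_uniformity (U : rel -> Prop) : Prop :=
  U (fun _ _ => True) /\
  (forall R S, U R -> (forall x y, R x y -> S x y) -> U S) /\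
  (forall R S, U R -> U S -> U (fun x y => R x y /\ S x y)) /\
  (forall R, U R -> forall x, R x x) /\
  (forall R, U R -> exists S, U S /\
      (forall x y z, S x y -> S y z -> R x z)).

Definition qu_topology (U : rel -> Prop) : set -> Prop :=
  fun G => forall x, G x -> exists R, U R /\ (forall y, R x y -> G y).

Definition transitive_rel (R : rel) : Prop :=
  forall x y z, R x y -> R y z -> R x z.

Definition qu_transitive (U : rel -> Prop) : Prop :=
  forall R, U R -> exists S, U S /\ transitive_rel S /\
     (forall x y, S x y -> R x y).

Definition in_T (tau : set -> Prop) (U : rel -> Prop) : Prop :=
  is_quasi_uniformity U /\ qu_transitive U /\
  (forall G, qu_topology U G <-> tau G).

(* Fletcher-Lindgren quasi-proximity *)
Definition is_quasi_proximity (d : set -> set -> Prop) : Prop :=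
  (forall A B C, d A (setU B C) <-> (d A B \/ d A C)) /\
  (forall A B C, d (setU A B) C <-> (d A C \/ d B C)) /\
  (forall A, ~ d A set0) /\ (forall A, ~ d set0 A) /\
  (forall x, d (single x) (single x)) /\
  (forall A B, ~ d A B -> exists C, ~ d A C /\ ~ d (setC C) B).

Definition qp_compatible (tau : set -> Prop) (d : set -> set -> Prop) : Prop :=
  forall G, tau G <-> (forall x, G x -> ~ d (single x) (setC G)).

Definition qu_proximity (U : rel -> Prop) : set -> set -> Prop :=
  fun A B => forall R, U R -> exists x y, A x /\ B y /\ R x y.

Definition in_pi (d : set -> set -> Prop) (U : rel -> Prop) : Prop :=
  is_quasi_uniformity U /\ (forall A B, qu_proximity U A B <-> d A B).

Definition coarsest_in_pi (d : set -> set -> Prop) (V : rel -> Prop) : Prop :=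
  in_pi d V /\ (forall U, in_pi d U -> forall R, V R -> U R).

Definition U_N (N : set) : rel := fun x y => (N x /\ N y) \/ ~ N x.

(* B(V) = {N in tau : U_N in V} *)
Definition lbase (tau : set -> Prop) (V : rel -> Prop) (N : set) : Prop :=
  tau N /\ V (U_N N).

Definition proper_subset (A B : set) : Prop := subset A B /\ ~ subset B A.

End Defs.

(* Main.v *)
Require Import Defs.
Set Implicit Arguments.
From Stdlib Require Import Classical IndefiniteDescription FunctionalExtensionality PropExtensionality List Arith Lia Wf_nat.
Import ListNotations.

Lemma set_ext (X : Type) (A B : set X) : (forall x, A x <-> B x) -> A = B.
Proof. intro H. apply functional_extensionality; intro x. apply propositional_extensionality; auto. Qed.

Definition EL {X : Type} (L : list (set X)) : rel X :=
  fun x y => forall M, In M L -> M x -> M y.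

Lemma EL_trans X (L : list (set X)) x y z : EL L x y -> EL L y z -> EL L x z.
Proof. unfold EL; intros H1 H2 M HM Hx; apply (H2 M HM); apply (H1 M HM Hx). Qed.

Lemma EL_app X (L1 L2 : list (set X)) x y : EL (L1 ++ L2) x y -> EL L1 x y /\ EL L2 x y.
Proof. unfold EL; intros H; split; intros M HM; apply H; apply in_or_app; auto. Qed.

Lemma EL_in X (U : rel X -> Prop) (L : list (set X)) :
  is_quasi_uniformity U -> (forall M, In M L -> U (U_N M)) -> U (EL L).
Proof.
  intros [Ht [Hup [Hi _]]]. induction L as [|M L IH]; intros HL.
  - apply (Hup _ _ Ht). intros x y _ M' [].
  - apply (Hup _ _ (Hi _ _ (HL M (or_introl eq_refl)) (IH (fun M' h => HL M' (or_intror h))))).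
    intros x y [H1 H2] M' [<-|HM'] Hx.
    + destruct H1 as [[_ h]|h]; [exact h| contradiction].
    + apply H2; auto.
Qed.

Lemma E_ind X (P : set X -> Prop) (Pr : rel X) (Good : set X -> set X -> Prop) :
  (forall A C, (forall x y, A x -> C y -> Pr x y) -> Good A C) ->
  (forall A C M, P M -> Good (fun x => A x /\ M x) (fun y => C y /\ M y) ->
      Good (fun x => A x /\ ~ M x) C -> Good A C) ->
  forall L, (forall M, In M L -> P M) ->
  forall A C, (forall x y, A x -> C y -> EL L x y -> Pr x y) -> Good A C.
Proof.
  intros Hb Hs L. induction L as [|M L IH]; intros HL A C H.
  - apply Hb. intros x y Ha Hc. apply H; auto. intros M [].
  - apply (Hs A C M (HL M (or_introl eq_refl))).
    + apply IH. intros; apply HL; right; auto.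
      intros x y [Ha Hm] [Hc Hm'] He. apply H; auto.
      intros M' [<-|h] hx; [exact Hm'|exact (He M' h hx)].
    + apply IH. intros; apply HL; right; auto.
      intros x y [Ha Hm] Hc He. apply H; auto.
      intros M' [<-|h] hx; [contradiction|exact (He M' h hx)].
Qed.
Lemma not_prox X (U : rel X -> Prop) A C :
  ~ qu_proximity U A C -> exists R, U R /\ forall x y, A x -> C y -> ~ R x y.
Proof.
  intro H. apply NNPP; intro H'. apply H. intros R HR. apply NNPP; intro H2.
  apply H'. exists R; split; auto. intros x y ha hc hr. apply H2. exists x, y; auto.
Qed.

Lemma sep_lemma X (tau : set X -> Prop) d Vd :
  qp_compatible tau d -> coarsest_in_pi d Vd -> qu_transitive Vd ->
  forall A C, ~ d A C -> exists N, lbase tau Vd N /\ (forall x, A x -> N x) /\ (forall y, C y -> ~ N y).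
Proof.
  intros Hc [[Hq Hp] _] Ht A C H.
  assert (H1 : ~ qu_proximity Vd A C) by (rewrite Hp; auto).
  destruct (not_prox H1) as [R [HR HR2]].
  destruct (Ht R HR) as [T [HT [HTt HTR]]].
  destruct Hq as [_ [Hup [_ [Hrefl _]]]].
  exists (fun y => exists x, A x /\ T x y). split; [split|split].
  - apply (proj2 (Hc _)). intros x [a [ha hax]] Hd. rewrite <- Hp in Hd.
    destruct (Hd T HT) as [x' [y [e [hy hxy]]]]. unfold single in e; subst x'.
    apply hy. exists a; split; auto. exact (HTt _ _ _ hax hxy).
  - apply (Hup T); auto. intros x y hxy. destruct (classic (exists a, A a /\ T a x)) as [[a [ha hax]]|hn].
    + left. split; [exists a; auto|]. exists a; split; auto. exact (HTt _ _ _ hax hxy).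
    + right; exact hn.
  - intros x hx. exists x; split; auto. apply Hrefl; auto.
  - intros y hy [a [ha hay]]. exact (HR2 a y ha hy (HTR _ _ hay)).
Qed.

Lemma topo_lemma X (tau : set X -> Prop) d U :
  qp_compatible tau d -> in_pi d U -> forall G, qu_topology U G <-> tau G.
Proof.
  intros Hc [Hq Hp] G. rewrite (Hc G). split.
  - intros H x hx Hd. rewrite <- Hp in Hd. destruct (H x hx) as [R [HR HR2]].
    destruct (Hd R HR) as [x' [y [e [hy hxy]]]]. unfold single in e; subst x'.
    exact (hy (HR2 y hxy)).
  - intros H x hx. assert (H1 : ~ qu_proximity U (single x) (setC G)) by (rewrite Hp; auto).
    destruct (not_prox H1) as [R [HR HR2]]. exists R; split; auto.
    intros y hy. apply NNPP; intro hn. exact (HR2 x y eq_refl hn hy).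
Qed.

Lemma base_lemma X (tau : set X -> Prop) d Vd :
  qp_compatible tau d -> coarsest_in_pi d Vd -> qu_transitive Vd ->
  forall R, Vd R -> exists L, (forall M, In M L -> lbase tau Vd M) /\ (forall x y, EL L x y -> R x y).
Proof.
  intros Hc Hco Ht.
  set (V' := fun R : rel X => exists L, (forall M, In M L -> lbase tau Vd M) /\ (forall x y, EL L x y -> R x y)).
  assert (Hq : is_quasi_uniformity Vd) by apply Hco.
  assert (HV : in_pi d V').
  { split; [split; [|split; [|split; [|split]]]|].
    - exists []; split; [intros M []|auto].
    - intros R S [L [HL HR]] HRS. exists L; split; auto.
    - intros R S [L1 [HL1 HR1]] [L2 [HL2 HR2]]. exists (L1 ++ L2). split.
      + intros M HM. apply in_app_or in HM. destruct HM; auto.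
      + intros x y He. destruct (EL_app _ _ He). auto.
    - intros R [L [_ HR]] x. apply HR. intros M _ h; exact h.
    - intros R [L [HL HR]]. exists (EL L). split.
      + exists L; split; auto.
      + intros x y z h1 h2. apply HR. exact (EL_trans h1 h2).
    - intros A C. split.
      + intros H. apply NNPP; intro Hd. destruct (sep_lemma Hc Hco Ht _ _ Hd) as [N [HN [HA HC]]].
        destruct (H (EL [N])) as [x [y [ha [hc he]]]].
        * exists [N]; split; auto. intros M [<-|[]]; auto.
        * apply (HC y hc). apply (he N (or_introl eq_refl)). auto.
      + intros H R [L [HL HR]]. destruct Hco as [[_ Hp] _]. rewrite <- Hp in H.
        destruct (H (EL L)) as [x [y [ha [hc he]]]].
        * apply EL_in; auto. intros M HM; apply HL; auto.
        * exists x, y; auto. }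
  intros R HR. apply (proj2 Hco V' HV R HR).
Qed.
Lemma back_gen X (tau : set X -> Prop) d Vd (W : rel X) :
  qp_compatible tau d -> coarsest_in_pi d Vd -> qu_transitive Vd ->
  (forall x, W x x) -> transitive_rel W -> ~ Vd W ->
  (forall A C : set X, (forall x y, A x -> C y -> ~ W x y) ->
     exists L, (forall M, In M L -> lbase tau Vd M) /\ forall x y, A x -> C y -> ~ EL L x y) ->
  exists V, in_pi d V /\ in_T tau V /\ ~ (forall R, V R <-> Vd R).
Proof.
  intros Hc Hco Ht HWr HWt HWn Hbase.
  assert (Hq : is_quasi_uniformity Vd) by apply Hco.
  destruct Hq as [Htop [Hup [Hi [Hrefl Hcomp]]]].
  set (V := fun S : rel X => exists R, Vd R /\ forall x y, R x y -> W x y -> S x y).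
  assert (HqV : is_quasi_uniformity V).
  { split; [|split; [|split; [|split]]].
    - exists (fun _ _ => True); split; auto.
    - intros R S [R0 [h1 h2]] h. exists R0; split; auto.
    - intros R S [R1 [h1 h1']] [R2 [h2 h2']]. exists (fun x y => R1 x y /\ R2 x y).
      split; [apply Hi; auto|]. intros x y [a b] w; split; auto.
    - intros R [R0 [h1 h2]] x. apply h2; auto. apply Hrefl; auto.
    - intros R [R0 [h1 h2]]. destruct (Ht R0 h1) as [T [HT [HTt HTR]]].
      exists (fun x y => T x y /\ W x y). split.
      + exists T; split; auto.
      + intros x y z [a b] [a' b']. apply h2. apply HTR. exact (HTt _ _ _ a a'). exact (HWt _ _ _ b b'). }
  assert (HpV : in_pi d V).
  { split; auto. intros A C. split.
    - intros H. pose proof (proj2 (proj1 Hco)) as Hp. apply Hp. intros R HR. apply H.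
      exists R; split; auto.
    - intros H S [R [HR HRS]]. apply NNPP; intro Hn.
      destruct (base_lemma Hc Hco Ht _ HR) as [L [HL HLR]].
      assert (Hg : exists L', (forall M, In M L' -> lbase tau Vd M) /\ forall x y, A x -> C y -> ~ EL L' x y).
      { apply (@E_ind X (lbase tau Vd) (fun x y => ~ W x y)
           (fun A C => exists L', (forall M, In M L' -> lbase tau Vd M) /\ forall x y, A x -> C y -> ~ EL L' x y))
           with (L := L); auto.
        - intros A0 C0 M HM [L2 [HL2 H2]] [L1 [HL1 H1]]. exists (M :: L1 ++ L2). split.
          + intros M' [<-|h]; auto. apply in_app_or in h; destruct h; auto.
          + intros x y ha hc he. destruct (classic (M x)) as [hm|hm].
            * assert (hy : M y) by (apply (he M (or_introl eq_refl)); auto).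
              apply (H2 x y (conj ha hm) (conj hc hy)). intros M' h; apply he; right; apply in_or_app; auto.
            * apply (H1 x y (conj ha hm) hc). intros M' h; apply he; right; apply in_or_app; auto.
        - intros x y ha hc he hw. apply Hn. exists x, y. split; [|split]; auto. }
      destruct Hg as [L' [HL' HsepL]].
      pose proof (proj2 (proj1 Hco)) as Hp. rewrite <- Hp in H.
      destruct (H (EL L')) as [x [y [ha [hc he]]]].
      + apply EL_in. apply Hco. intros M HM; apply HL'; auto.
      + exact (HsepL x y ha hc he). }
  exists V. split; [auto|split].
  - split; [auto|split].
    + intros R [R0 [h1 h2]]. destruct (Ht R0 h1) as [T [HT [HTt HTR]]].
      exists (fun x y => T x y /\ W x y). split; [|split].
      * exists T; split; auto.
      * intros x y z [a b] [a' b']. split; [exact (HTt _ _ _ a a')|exact (HWt _ _ _ b b')].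
      * intros x y [a b]. apply h2; auto.
    + apply (topo_lemma Hc HpV).
  - intros H. apply HWn. apply H. exists (fun _ _ => True). split; auto.
Qed.
Lemma mono_inc X (N : nat -> set X) : (forall i, proper_subset (N i) (N (S i))) ->
  forall i j, i <= j -> forall x, N i x -> N j x.
Proof. intros H i j hij. induction hij; auto. intros x h. apply (proj1 (H m)); auto. Qed.

Lemma mono_dec X (N : nat -> set X) : (forall i, proper_subset (N (S i)) (N i)) ->
  forall i j, i <= j -> forall x, N j x -> N i x.
Proof. intros H i j hij. induction hij; auto. intros x h. apply IHhij. apply (proj1 (H m)); auto. Qed.

Lemma case_inc X (tau : set X -> Prop) d Vd (N : nat -> set X) :
  qp_compatible tau d -> coarsest_in_pi d Vd -> qu_transitive Vd ->
  (forall i, lbase tau Vd (N i)) ->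
  (forall i, proper_subset (N i) (N (S i))) ->
  lbase tau Vd (fun x => exists i, N i x) ->
  exists V, in_pi d V /\ in_T tau V /\ ~ (forall R, V R <-> Vd R).
Proof.
  intros Hc Hco Ht HN Hps HU.
  pose proof (@mono_inc X N Hps) as Hm.
  apply (@back_gen X tau d Vd (fun x y => forall i, N i x -> N i y)); auto.
  - intros x y z h1 h2 i h; auto.
  - intros HW. destruct (base_lemma Hc Hco Ht _ HW) as [L [HL HLW]].
    assert (Hg : (forall x : X, True -> True) -> exists k, forall x, True -> (exists i, N i x) -> N k x).
    { apply (@E_ind X (fun _ => True) (fun x y => forall i, N i x -> N i y)
         (fun A C => (forall x, A x -> C x) -> exists k, forall x, A x -> (exists i, N i x) -> N k x))
        with (L := L); auto.
      - intros A C HAC hsub. destruct (classic (exists a, A a /\ exists i, N i a)) as [[a [ha [k hk]]]|hn].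
        + exists k. intros x hx _. exact (HAC a x ha (hsub x hx) k hk).
        + exists 0. intros x hx hu. exfalso; apply hn; eauto.
      - intros A C M _ H1 H2 hsub.
        assert (E1 : forall x, A x /\ M x -> C x /\ M x) by (intros x [a b]; split; auto).
        assert (E2 : forall x, A x /\ ~ M x -> C x) by (intros x [a b]; auto).
        destruct (H1 E1) as [k1 h1]. destruct (H2 E2) as [k2 h2].
        exists (max k1 k2). intros x hx hu. destruct (classic (M x)) as [hm|hm].
        + apply (Hm k1). lia. apply h1; auto.
        + apply (Hm k2). lia. apply h2; auto.
      - intros x y _ _ he. exact (HLW x y he). }
    destruct (Hg (fun _ h => h)) as [k hk].
    apply (proj2 (Hps k)). intros x hx. apply hk; eauto.
  - intros A C H. destruct (classic (exists a, A a)) as [[a ha]|hA];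
      [destruct (classic (exists c, C c)) as [[c hc]|hC]|].
    2: { exists []. split; [intros M []|]. intros x y _ hy _; apply hC; eauto. }
    2: { exists []. split; [intros M []|]. intros x y hx; exfalso; apply hA; eauto. }
    set (J := fun i => forall y, C y -> ~ N i y).
    assert (F1 : forall x, A x -> exists i, N i x /\ J i).
    { intros x hx.
      assert (Hex : exists i, N i x).
      { apply NNPP; intro hn. apply (H x c hx hc). intros i hi; exfalso; eauto. }
      destruct Hex as [i0 hi0]. revert hi0. induction i0 as [i IH] using lt_wf_ind. intros hi.
      destruct (classic (J i)) as [hj|hj]; [eauto|].
      apply NNPP; intro hn. apply hj. intros y hy hny.
      apply (H x y hx hy). intros j hj'. apply NNPP; intro hnj.
      assert (j < i).
      { destruct (le_lt_dec i j) as [hle|hlt]; auto. exfalso. apply hnj. apply (Hm i j hle); auto. }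
      apply hn. apply (IH j); auto. }
    assert (Jdown : forall i j, i <= j -> J j -> J i).
    { intros i j hij hj y hy hn. apply (hj y hy). apply (Hm i j hij); auto. }
    destruct (classic (exists i, J i /\ ~ J (S i))) as [[i [hi hni]]|hno].
    + exists [N i]. split; [intros M [<-|[]]; auto|].
      intros x y hx hy he. destruct (F1 x hx) as [j [hj1 hj2]].
      assert (j <= i).
      { destruct (le_lt_dec j i) as [hle|hlt]; auto. exfalso. apply hni. apply (Jdown _ j); auto. }
      apply (hi y hy). apply (he (N i) (or_introl eq_refl)). apply (Hm j i); auto.
    + assert (Jall : forall i, J i).
      { destruct (F1 a ha) as [j0 [_ hj0]].
        assert (forall n, J (j0 + n)).
        { induction n. rewrite Nat.add_0_r; auto. rewrite Nat.add_succ_r.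
          apply NNPP; intro h. apply hno; eauto. }
        intros i. apply (Jdown i (j0 + i)); auto. lia. }
      exists [fun x => exists i, N i x]. split; [intros M [<-|[]]; auto|].
      intros x y hx hy he. destruct (F1 x hx) as [j [hj1 _]].
      destruct (he _ (or_introl eq_refl)) as [k hk]; eauto.
      exact (Jall k y hy hk).
Qed.
Lemma case_dec X (tau : set X -> Prop) d Vd (N : nat -> set X) :
  qp_compatible tau d -> coarsest_in_pi d Vd -> qu_transitive Vd ->
  (forall i, lbase tau Vd (N i)) ->
  (forall i, proper_subset (N (S i)) (N i)) ->
  lbase tau Vd (fun x => forall i, N i x) ->
  exists V, in_pi d V /\ in_T tau V /\ ~ (forall R, V R <-> Vd R).
Proof.
  intros Hc Hco Ht HN Hps HU.
  pose proof (@mono_dec X N Hps) as Hm.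
  apply (@back_gen X tau d Vd (fun x y => forall i, N i x -> N i y)); auto.
  - intros x y z h1 h2 i h; auto.
  - intros HW. destruct (base_lemma Hc Hco Ht _ HW) as [L [HL HLW]].
    assert (Hg : (forall x : X, True -> True) -> exists k, forall x, True -> N k x -> forall i, N i x).
    { apply (@E_ind X (fun _ => True) (fun x y => forall i, N i x -> N i y)
         (fun A C => (forall x, A x -> C x) -> exists k, forall x, A x -> N k x -> forall i, N i x))
        with (L := L); auto.
      - intros A C HAC hsub. destruct (classic (forall a, A a -> forall i, N i a)) as [hall|hn].
        + exists 0. intros x hx _. auto.
        + apply not_all_ex_not in hn. destruct hn as [a hn].
          apply imply_to_and in hn. destruct hn as [ha hn].
          apply not_all_ex_not in hn. destruct hn as [k hk].
          exists k. intros x hx hkx. exfalso. apply hk. exact (HAC x a hx (hsub a ha) k hkx).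
      - intros A C M _ H1 H2 hsub.
        assert (E1 : forall x, A x /\ M x -> C x /\ M x) by (intros x [a b]; split; auto).
        assert (E2 : forall x, A x /\ ~ M x -> C x) by (intros x [a b]; auto).
        destruct (H1 E1) as [k1 h1]. destruct (H2 E2) as [k2 h2].
        exists (max k1 k2). intros x hx hk. destruct (classic (M x)) as [hm|hm].
        + apply h1; auto. apply (Hm k1 (max k1 k2)); auto. lia.
        + apply h2; auto. apply (Hm k2 (max k1 k2)); auto. lia.
      - intros x y _ _ he. exact (HLW x y he). }
    destruct (Hg (fun _ h => h)) as [k hk].
    apply (proj2 (Hps k)). intros x hx. apply hk; auto.
  - intros A C H. destruct (classic (exists a, A a)) as [[a ha]|hA];
      [destruct (classic (exists c, C c)) as [[c hc]|hC]|].
    2: { exists []. split; [intros M []|]. intros x y _ hy _; apply hC; eauto. }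
    2: { exists []. split; [intros M []|]. intros x y hx; exfalso; apply hA; eauto. }
    set (J := fun i => forall x, A x -> N i x).
    assert (F1 : forall y, C y -> exists i, ~ N i y /\ J i).
    { intros y hy.
      assert (Hex : exists i, ~ N i y).
      { apply NNPP; intro hn. apply (H a y ha hy). intros i hi. apply NNPP; intro h; eauto. }
      destruct Hex as [i0 hi0]. revert hi0. induction i0 as [i IH] using lt_wf_ind. intros hi.
      destruct (classic (J i)) as [hj|hj]; [eauto|].
      apply NNPP; intro hn. apply hj. intros x hx. apply NNPP; intro hnx.
      apply (H x y hx hy). intros j hj'. apply NNPP; intro hnj.
      assert (j < i).
      { destruct (le_lt_dec i j) as [hle|hlt]; auto. exfalso. apply hnx. apply (Hm i j hle); auto. }
      apply hn. apply (IH j); auto. }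
    assert (Jdown : forall i j, i <= j -> J j -> J i).
    { intros i j hij hj x hx. apply (Hm i j hij). apply hj; auto. }
    destruct (classic (exists i, J i /\ ~ J (S i))) as [[i [hi hni]]|hno].
    + exists [N i]. split; [intros M [<-|[]]; auto|].
      intros x y hx hy he. destruct (F1 y hy) as [j [hj1 hj2]].
      assert (j <= i).
      { destruct (le_lt_dec j i) as [hle|hlt]; auto. exfalso. apply hni. apply (Jdown _ j); auto. }
      apply hj1. apply (Hm j i); auto. apply (he (N i) (or_introl eq_refl)). apply hi; auto.
    + assert (Jall : forall i, J i).
      { destruct (F1 c hc) as [j0 [_ hj0]].
        assert (forall n, J (j0 + n)).
        { induction n. rewrite Nat.add_0_r; auto. rewrite Nat.add_succ_r.
          apply NNPP; intro h. apply hno; eauto. }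
        intros i. apply (Jdown i (j0 + i)); auto. lia. }
      exists [fun x => forall i, N i x]. split; [intros M [<-|[]]; auto|].
      intros x y hx hy he. destruct (F1 y hy) as [j [hj1 _]].
      apply hj1. apply (he _ (or_introl eq_refl)). intros i; apply Jall; auto.
Qed.
Lemma dep_seq (A : Type) (P : A -> Prop) (R : A -> A -> Prop) (a0 : A) :
  P a0 -> (forall a, P a -> exists b, P b /\ R a b) ->
  exists f : nat -> A, f 0 = a0 /\ forall n, P (f n) /\ R (f n) (f (S n)).
Proof.
  intros H0 Hs.
  assert (H' : forall s : {a | P a}, exists t : {a | P a}, R (proj1_sig s) (proj1_sig t)).
  { intros [a ha]. destruct (Hs a ha) as [b [hb hr]]. exists (exist _ b hb). exact hr. }
  set (g := fun s => proj1_sig (constructive_indefinite_description _ (H' s))).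
  set (F := fix F (n : nat) : {a | P a} := match n with 0 => exist _ a0 H0 | S m => g (F m) end).
  exists (fun n => proj1_sig (F n)). split; [reflexivity|]. intros n. split.
  - exact (proj2_sig (F n)).
  - simpl. exact (proj2_sig (constructive_indefinite_description _ (H' (F n)))).
Qed.

Definition Cl {X} (T : rel X) (G : set X) := forall x y, G x -> T x y -> G y.
Definition small {X} (T : rel X) (G : set X) :=
  exists l : list (set X), forall H, Cl T H -> subset H G -> In H l.

Lemma small_sub X (T : rel X) G H : small T G -> subset H G -> small T H.
Proof. intros [l hl] hs. exists l. intros K hK hKH. apply hl; auto. intros x hx; auto. Qed.

Lemma small_union X (T : rel X) G1 G2 : Cl T G1 -> Cl T G2 ->
  small T G1 -> small T G2 -> small T (setU G1 G2).
Proof.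
  intros c1 c2 [l1 h1] [l2 h2].
  exists (flat_map (fun a => map (fun b => setU a b) l2) l1).
  intros H hH hs. apply in_flat_map. exists (fun x => H x /\ G1 x). split.
  - apply h1. intros x y [a b] t; split; [exact (hH x y a t)|exact (c1 x y b t)].
    intros x [a b]; exact b.
  - apply in_map_iff. exists (fun x => H x /\ G2 x). split.
    + apply set_ext. intros x. unfold setU. split.
      * intros [[a _]|[a _]]; exact a.
      * intros a. destruct (hs x a) as [b|b]; [left|right]; split; auto.
    + apply h2. intros x y [a b] t; split; [exact (hH x y a t)|exact (c2 x y b t)].
      intros x [a b]; exact b.
Qed.

Definition Desc {X} (T : rel X) (G : set X) :=
  exists G', Cl T G' /\ ~ small T G' /\ proper_subset G' G.

Lemma principal X (T : rel X) (G : set X) x0 : (forall x, T x x) -> transitive_rel T ->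
  Cl T G -> G x0 -> subset G (T x0) -> ~ small T G -> Desc T G.
Proof.
  intros Hr Ht cG g0 sG nG.
  exists (fun y => G y /\ ~ T y x0). split; [|split].
  - intros x y [a b] t. split; [exact (cG x y a t)|]. intros t'. apply b. exact (Ht _ _ _ t t').
  - intros [l hl]. apply nG. exists (G :: l). intros H hH hs.
    destruct (classic (H x0)) as [h0|h0].
    + left. apply set_ext. intros y; split; [intros gy; exact (hH x0 y h0 (sG y gy))|apply hs].
    + right. apply hl; auto. intros y hy. split; [apply hs; auto|]. intros t. apply h0. exact (hH y x0 hy t).
  - split. intros y [a _]; exact a. intros hs. destruct (hs x0 g0) as [_ h]. apply h, Hr.
Qed.

Lemma set0_small X (T : rel X) : small T (@set0 X).
Proof.
  exists [@set0 X]. intros H _ hs. left. apply set_ext. intros x; split; [intros []|intros h; exact (hs x h)].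
Qed.

Lemma Tx_small X (T : rel X) (G : set X) x : (forall x, T x x) -> transitive_rel T ->
  Cl T G -> ~ small T G -> ~ Desc T G -> G x -> small T (T x).
Proof.
  intros Hr Ht cG nG nD gx. apply NNPP; intro ns.
  destruct (classic (subset G (T x))) as [hs|hs].
  - apply nD. apply (@principal X T G x Hr Ht cG gx hs nG).
  - apply nD. exists (T x). split; [|split]; auto.
    + intros y z t1 t2. exact (Ht _ _ _ t1 t2).
    + split; auto. intros y t. exact (cG x y gx t).
Qed.

Lemma forward_gen X (tau : set X -> Prop) Vd (T : rel X) :
  is_quasi_uniformity Vd -> (forall x, T x x) -> transitive_rel T -> ~ Vd T ->
  (forall G, Cl T G -> lbase tau Vd G) ->
  ((exists N : nat -> set X,
      (forall i, lbase tau Vd (N i)) /\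
      (forall i, proper_subset (N i) (N (S i))) /\
      lbase tau Vd (fun x => exists i, N i x))
   \/
   (exists N : nat -> set X,
      (forall i, lbase tau Vd (N i)) /\
      (forall i, proper_subset (N (S i)) (N i)) /\
      lbase tau Vd (fun x => forall i, N i x))).
Proof.
  intros Hq Hr Ht nT HB.
  assert (ClT : Cl T (@setT X)) by (intros x y _ _; exact I).
  assert (nT' : ~ small T (@setT X)).
  { intros [l hl].
    assert (Hf : exists l', (forall M, In M l' -> Cl T M) /\ (forall M, In M l -> Cl T M -> In M l')).
    { clear hl. induction l as [|a l [l' [h1 h2]]].
      - exists []. split; [intros M []|intros M []].
      - destruct (classic (Cl T a)) as [ca|ca].
        + exists (a :: l'). split.
          * intros M [<-|h]; auto.
          * intros M [<-|h] c; [left; auto|right; auto].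
        + exists l'. split; auto. intros M [<-|h] c; [contradiction|auto]. }
    destruct Hf as [l' [h1 h2]]. apply nT.
    apply (proj1 (proj2 Hq) (EL l')).
    - apply EL_in; auto. intros M hM. apply (HB M (h1 M hM)).
    - intros x y he. apply (he (T x)).
      + apply h2. apply hl. intros a b t1 t2; exact (Ht _ _ _ t1 t2). intros z _; exact I.
        intros a b t1 t2; exact (Ht _ _ _ t1 t2).
      + apply Hr. }
  destruct (classic (forall G, Cl T G -> ~ small T G -> Desc T G)) as [hD|hD].
  - right.
    destruct (@dep_seq (set X) (fun G => Cl T G /\ ~ small T G) (fun G G' => proper_subset G' G) (@setT X))
      as [f [f0 hf]]; auto.
    { intros G [c n]. destruct (hD G c n) as [G' [c' [n' p]]]. exists G'; auto. }
    exists f. split; [|split].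
    + intros i; apply HB; apply (hf i).
    + intros i; apply (hf i).
    + apply HB. intros x y hx t i. exact (proj1 (proj1 (hf i)) x y (hx i) t).
  - left.
    apply not_all_ex_not in hD. destruct hD as [G hD].
    apply imply_to_and in hD. destruct hD as [cG hD].
    apply imply_to_and in hD. destruct hD as [nG nD].
    destruct (@dep_seq (set X) (fun H => Cl T H /\ small T H /\ subset H G) (fun H H' => proper_subset H H') (@set0 X))
      as [f [f0 hf]].
    { split; [intros x y []|split; [apply set0_small|intros x []]]. }
    { intros H [cH [sH hHG]].
      assert (Hx : exists x, G x /\ ~ H x).
      { apply NNPP; intro hn. apply nG. apply (small_sub sH). intros x gx. apply NNPP; intro h. apply hn; eauto. }
      destruct Hx as [x [gx hx]].
      exists (setU H (T x)). split; [split; [|split]|].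
      - intros a b [h|h] t; [left; exact (cH a b h t)|right; exact (Ht _ _ _ h t)].
      - apply small_union; auto. intros a b t1 t2; exact (Ht _ _ _ t1 t2).
        apply (@Tx_small X T G x Hr Ht cG nG nD gx).
      - intros a [h|h]; [apply hHG; auto|exact (cG x a gx h)].
      - split. intros a h; left; auto. intros hs. apply hx. exact (hs x (or_intror (Hr x))). }
    exists f. split; [|split].
    + intros i; apply HB; apply (hf i).
    + intros i; apply (hf i).
    + apply HB. intros x y [i hx] t. exists i. exact (proj1 (proj1 (hf i)) x y hx t).
Qed.
Theorem theorem2p6 (X : Type) (tau : set X -> Prop) (d : set X -> set X -> Prop)
  (Vd : rel X -> Prop) :
  is_topology tau ->
  is_quasi_proximity d ->
  qp_compatible tau d ->
  coarsest_in_pi d Vd ->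
  qu_transitive Vd ->
  (exists V : rel X -> Prop,
      in_pi d V /\ in_T tau V /\ ~ (forall R, V R <-> Vd R))
  <->
  ((exists N : nat -> set X,
      (forall i, lbase tau Vd (N i)) /\
      (forall i, proper_subset (N i) (N (S i))) /\
      lbase tau Vd (fun x => exists i, N i x))
   \/
   (exists N : nat -> set X,
      (forall i, lbase tau Vd (N i)) /\
      (forall i, proper_subset (N (S i)) (N i)) /\
      lbase tau Vd (fun x => forall i, N i x))).
Proof.
  intros _ _ Hc Hco Ht. split.
  - intros [V [HpV [[HqV [HtV _]] Hne]]].
    assert (HR : exists R, V R /\ ~ Vd R).
    { apply NNPP; intro hn. apply Hne. intros R. split.
      - intros h. apply NNPP; intro h'. apply hn; eauto.
      - intros h. apply (proj2 Hco V HpV R h). }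
    destruct HR as [R [HVR HnR]].
    destruct (HtV R HVR) as [T [HT [HTt HTR]]].
    assert (Hq : is_quasi_uniformity Vd) by apply Hco.
    apply (@forward_gen X tau Vd T Hq).
    + intros x. apply (proj1 (proj2 (proj2 (proj2 HqV)))); auto.
    + exact HTt.
    + intros h. apply HnR. apply (proj1 (proj2 Hq) T); auto.
    + intros G cG.
      assert (Hn : ~ d G (setC G)).
      { intros h. apply (proj2 HpV) in h. destruct (h T HT) as [x [y [gx [ny t]]]].
        exact (ny (cG x y gx t)). }
      destruct (sep_lemma Hc Hco Ht _ _ Hn) as [N [HN [h1 h2]]].
      assert (E : N = G).
      { apply set_ext. intros x; split; [|apply h1]. intros nx. apply NNPP; intro h. exact (h2 x h nx). }
      rewrite <- E; exact HN.
  - intros [[N [h1 [h2 h3]]]|[N [h1 [h2 h3]]]].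
    + exact (@case_inc X tau d Vd N Hc Hco Ht h1 h2 h3).
    + exact (@case_dec X tau d Vd N Hc Hco Ht h1 h2 h3).
Qed.
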